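(* Let $(G^{(m)})_{m\ge1}$ be a sequence of finite simple graphs, and for each $m$ let $C_m\subseteq V(G^{(m)})$ be a clique (a set of pairwise adjacent vertices) in $G^{(m)}$. Let $S_m\subseteq C_m$ be the set of non-gateway vertices of $C_m$, and suppose $|S_m|\to\infty$ as $m\to\infty$. Let $x_m\in S_m$. Then for every fixed $t\ge0$, $$\lim_{m\to\infty}P^{x_m}_{G^{(m)},t}(x_m)=1.$$
   Context: For a finite simple graph $G$, $L_G=D_G-A_G$ is its Laplacian ($A_G$ adjacency matrix, $D_G$ diagonal degree matrix). The continuous-time quantum walk (CTQW) on $G$ has evolution operator $U_{G,t}=e^{\sqrt{-1}\,tL_G}$ ($t\ge0$), and the transition probability is $P^x_{G,t}(y)=|(U_{G,t})_{x,y}|^2$ for $x,y\in V(G)$. If $C$ is a clique in $G$, a vertex $v\in C$ is a gateway vertex of $C$ if there is an edge $(v,w)$ of $G$ with $w\in V(G)\setminus C$; the number of gateway vertices is $n_g$ and $|C|=n_c$, so $|S|=n_c-n_g$ for the set $S$ of non-gateway vertices. *)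

(* Defs.v *)
From Stdlib Require Import Reals List Bool Arith ClassicalEpsilon.
Open Scope R_scope.

Definition simple_graph (n : nat) (adj : nat -> nat -> bool) : Prop :=
  (forall u v, (u < n)%nat -> (v < n)%nat -> adj u v = adj v u) /\
  (forall u, (u < n)%nat -> adj u u = false).

Definition sumR (n : nat) (f : nat -> R) : R :=
  fold_right Rplus 0 (map f (seq 0 n)).

Definition degree (n : nat) (adj : nat -> nat -> bool) (u : nat) : R :=
  sumR n (fun w => if adj u w then 1 else 0).

Definition laplacian (n : nat) (adj : nat -> nat -> bool) (u v : nat) : R :=
  (if Nat.eqb u v then degree n adj u else 0) - (if adj u v then 1 else 0).

Fixpoint lap_pow (n : nat) (adj : nat -> nat -> bool) (k : nat) (u v : nat) : R :=
  match k with
  | O => if Nat.eqb u v then 1 else 0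
  | S k' => sumR n (fun w => laplacian n adj u w * lap_pow n adj k' w v)
  end.

(* real and imaginary parts of i^k *)
Definition re_ipow (k : nat) : R :=
  if Nat.even k then (-1) ^ (Nat.div2 k) else 0.
Definition im_ipow (k : nat) : R :=
  if Nat.even k then 0 else (-1) ^ (Nat.div2 k).

Definition series_value (f : nat -> R) : R :=
  epsilon (inhabits 0) (fun l => infinite_sum f l).

(* Since L is real, e^{i t L} = sum_k (i t L)^k / k! has
   real part sum_k Re(i^k) t^k L^k / k! and imaginary part sum_k Im(i^k) t^k L^k / k!. *)
Definition U_re (n : nat) (adj : nat -> nat -> bool) (t : R) (x y : nat) : R :=
  series_value (fun k => re_ipow k * t ^ k / INR (fact k) * lap_pow n adj k x y).
Definition U_im (n : nat) (adj : nat -> nat -> bool) (t : R) (x y : nat) : R :=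
  series_value (fun k => im_ipow k * t ^ k / INR (fact k) * lap_pow n adj k x y).

Definition transition_prob (n : nat) (adj : nat -> nat -> bool) (t : R) (x y : nat) : R :=
  (U_re n adj t x y) ^ 2 + (U_im n adj t x y) ^ 2.

Definition is_clique (n : nat) (adj : nat -> nat -> bool) (C : nat -> bool) : Prop :=
  (forall v, C v = true -> (v < n)%nat) /\
  (forall u v, C u = true -> C v = true -> u <> v -> adj u v = true).

Definition gatewayb (n : nat) (adj : nat -> nat -> bool) (C : nat -> bool) (v : nat) : bool :=
  C v && existsb (fun w => negb (C w) && adj v w) (seq 0 n).

Definition in_nongateway (n : nat) (adj : nat -> nat -> bool) (C : nat -> bool) (v : nat) : bool :=
  C v && negb (gatewayb n adj C v).

Definition card_nongateway (n : nat) (adj : nat -> nat -> bool) (C : nat -> bool) : nat :=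
  length (filter (in_nongateway n adj C) (seq 0 n)).

(* Main.v *)
Require Import Defs.
From Stdlib Require Import Reals List Bool Arith Lia Lra Classical ClassicalEpsilon.
From Coquelicot Require Import Coquelicot.
Open Scope R_scope.

Lemma fold_shift (l : list R) (a : R) :
  fold_right Rplus a l = fold_right Rplus 0 l + a.
Proof. induction l; simpl; [lra| rewrite IHl; lra]. Qed.

Lemma sumR_S n f : sumR (S n) f = sumR n f + f n.
Proof.
  unfold sumR. rewrite seq_S, map_app, fold_right_app. simpl.
  rewrite fold_shift. lra.
Qed.

Lemma sumR_ext n f g : (forall w, (w < n)%nat -> f w = g w) -> sumR n f = sumR n g.
Proof.
  induction n; intros H; [reflexivity|].
  rewrite !sumR_S, IHn, H; auto.
Qed.

Lemma sumR_plus n f g : sumR n (fun w => f w + g w) = sumR n f + sumR n g.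
Proof. induction n; [simpl; unfold sumR; simpl; lra|]. rewrite !sumR_S, IHn; lra. Qed.

Lemma sumR_minus n f g : sumR n (fun w => f w - g w) = sumR n f - sumR n g.
Proof. induction n; [simpl; unfold sumR; simpl; lra|]. rewrite !sumR_S, IHn; lra. Qed.

Lemma sumR_scal n c f : sumR n (fun w => c * f w) = c * sumR n f.
Proof. induction n; [simpl; unfold sumR; simpl; lra|]. rewrite !sumR_S, IHn; lra. Qed.

Lemma sumR_const n c : sumR n (fun _ => c) = INR n * c.
Proof. induction n; [simpl; unfold sumR; simpl; lra|]. rewrite !sumR_S, IHn, S_INR; lra. Qed.

Lemma sumR_swap n m f :
  sumR n (fun a => sumR m (fun b => f a b)) = sumR m (fun b => sumR n (fun a => f a b)).
Proof.
  induction n.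
  - rewrite (sumR_ext m _ (fun _ => 0)) by (intros; reflexivity).
    rewrite sumR_const. unfold sumR; simpl; lra.
  - rewrite sumR_S, IHn, <- sumR_plus. apply sumR_ext. intros. rewrite sumR_S. reflexivity.
Qed.

Lemma sumR_le n f g : (forall w, (w < n)%nat -> f w <= g w) -> sumR n f <= sumR n g.
Proof.
  induction n; intros H; [unfold sumR; simpl; lra|].
  rewrite !sumR_S. assert (f n <= g n) by auto. assert (sumR n f <= sumR n g) by auto. lra.
Qed.

Lemma sumR_lt n f g : (forall w, (w < n)%nat -> f w <= g w) ->
  (exists w, (w < n)%nat /\ f w < g w) -> sumR n f < sumR n g.
Proof.
  induction n; intros H [w0 [Hw Hlt]]; [lia|].
  rewrite !sumR_S. destruct (Nat.eq_dec w0 n).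
  - subst. assert (sumR n f <= sumR n g) by (apply sumR_le; auto). lra.
  - assert (sumR n f < sumR n g) by (apply IHn; auto; exists w0; split; [lia|auto]).
    assert (f n <= g n) by auto. lra.
Qed.

Lemma sumR_abs n f : Rabs (sumR n f) <= sumR n (fun w => Rabs (f w)).
Proof.
  induction n; [unfold sumR; simpl; rewrite Rabs_R0; lra|].
  rewrite !sumR_S. eapply Rle_trans; [apply Rabs_triang|]. lra.
Qed.

Lemma sumR_delta n a f : (a < n)%nat ->
  sumR n (fun w => if Nat.eqb w a then f w else 0) = f a.
Proof.
  induction n; intros H; [lia|]. rewrite sumR_S.
  destruct (Nat.eq_dec a n).
  - subst. rewrite Nat.eqb_refl.
    rewrite (sumR_ext n _ (fun _ => 0)).
    + rewrite sumR_const. lra.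
    + intros w Hw. destruct (Nat.eqb_spec w n); [lia|auto].
  - rewrite IHn by lia. destruct (Nat.eqb_spec n a); [lia|lra].
Qed.

Lemma count_list (p : nat -> bool) l :
  fold_right Rplus 0 (map (fun y => if p y then 1 else 0) l) = INR (length (filter p l)).
Proof.
  induction l; [reflexivity|]. cbn [map fold_right filter]. rewrite IHl.
  destruct (p a); cbn [length]; [rewrite S_INR|]; lra.
Qed.

Lemma sumR_count n (p : nat -> bool) : sumR n (fun y => if p y then 1 else 0) = INR (length (filter p (seq 0 n))).
Proof. apply count_list. Qed.

Fixpoint Mpow (n : nat) (M : nat -> nat -> R) (k : nat) (u v : nat) : R :=
  match k with
  | O => if Nat.eqb u v then 1 else 0
  | S k' => sumR n (fun w => M u w * Mpow n M k' w v)
  end.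

Lemma lap_pow_Mpow n adj k : forall u v, lap_pow n adj k u v = Mpow n (laplacian n adj) k u v.
Proof.
  induction k; intros; simpl; [reflexivity|]. apply sumR_ext; intros. rewrite IHk; reflexivity.
Qed.

Lemma Mpow_S_r n M k : forall u v, (u < n)%nat -> (v < n)%nat ->
  Mpow n M (S k) u v = sumR n (fun w => Mpow n M k u w * M w v).
Proof.
  induction k; intros u v Hu Hv.
  - simpl. rewrite (sumR_ext n _ (fun w => if Nat.eqb w v then M u w else 0)).
    2:{ intros w _. destruct (Nat.eqb w v); lra. }
    rewrite sumR_delta by auto.
    rewrite (sumR_ext n _ (fun w => if Nat.eqb w u then M w v else 0)).
    2:{ intros w _. rewrite Nat.eqb_sym. destruct (Nat.eqb w u); lra. }
    rewrite sumR_delta by auto. reflexivity.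
  - change (Mpow n M (S (S k)) u v) with (sumR n (fun w => M u w * Mpow n M (S k) w v)).
    rewrite (sumR_ext n _ (fun w => sumR n (fun z => M u w * Mpow n M k w z * M z v))).
    2:{ intros w Hw. rewrite IHk by auto. rewrite <- sumR_scal. apply sumR_ext; intros; ring. }
    rewrite sumR_swap. apply sumR_ext. intros z Hz. simpl.
    rewrite Rmult_comm, <- sumR_scal. apply sumR_ext; intros; ring.
Qed.

Lemma Mpow_bound n M K : 0 <= K -> (forall u w, Rabs (M u w) <= K) ->
  forall k u v, Rabs (Mpow n M k u v) <= (INR n * K) ^ k.
Proof.
  intros HK HM k. induction k; intros u v.
  - simpl. destruct (Nat.eqb u v); rewrite ?Rabs_R1, ?Rabs_R0; lra.
  - simpl. eapply Rle_trans; [apply sumR_abs|].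
    eapply Rle_trans.
    + apply (sumR_le _ _ (fun _ => K * (INR n * K) ^ k)). intros w _.
      rewrite Rabs_mult. apply Rmult_le_compat; auto using Rabs_pos.
    + rewrite sumR_const. lra.
Qed.

Definition acoef (s : nat -> R) n M u v k := s k / INR (fact k) * Mpow n M k u v.

Lemma re_ipow_bound k : Rabs (re_ipow k) <= 1.
Proof. unfold re_ipow. destruct (Nat.even k); [rewrite pow_1_abs|rewrite Rabs_R0]; lra. Qed.
Lemma im_ipow_bound k : Rabs (im_ipow k) <= 1.
Proof. unfold im_ipow. destruct (Nat.even k); [rewrite Rabs_R0|rewrite pow_1_abs]; lra. Qed.

Lemma re_im_succ k : re_ipow (S k) = - im_ipow k /\ im_ipow (S k) = re_ipow k.
Proof.
  induction k.
  - unfold re_ipow, im_ipow; simpl; split; lra.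
  - destruct IHk as [H1 H2].
    assert (E1 : re_ipow (S (S k)) = - re_ipow k).
    { unfold re_ipow. change (Nat.even (S (S k))) with (Nat.even k).
      change (Nat.div2 (S (S k))) with (S (Nat.div2 k)). destruct (Nat.even k); simpl; lra. }
    assert (E2 : im_ipow (S (S k)) = - im_ipow k).
    { unfold im_ipow. change (Nat.even (S (S k))) with (Nat.even k).
      change (Nat.div2 (S (S k))) with (S (Nat.div2 k)). destruct (Nat.even k); simpl; lra. }
    split; lra.
Qed.

Lemma fact_bound (x : R) k : 0 <= x -> x ^ k / INR (fact k) <= exp x.
Proof.
  intros Hx. eapply Rle_trans; [|apply (exp_ge_taylor x k Hx)].
  destruct k; cbn [sum_f_R0]; [apply Rle_refl|].
  assert (0 <= sum_f_R0 (fun k0 => x ^ k0 / INR (fact k0)) k).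
  { apply cond_pos_sum. intros. apply Rdiv_le_0_compat; [apply pow_le; auto| apply INR_fact_lt_0]. }
  lra.
Qed.

Lemma radius_inf (a : nat -> R) B : 0 <= B ->
  (forall k, Rabs (a k) <= B ^ k / INR (fact k)) -> forall t, Rbar_lt (Rabs t) (CV_radius a).
Proof.
  intros HB Ha t. set (r := Rabs t + 1).
  assert (Hr : 0 < r) by (unfold r; pose proof (Rabs_pos t); lra).
  apply Rbar_lt_le_trans with (Finite r); [simpl; unfold r; lra|].
  apply (proj1 (CV_radius_bounded a)). exists (exp (B * r)). intros k.
  rewrite Rabs_mult, <- RPow_abs, (Rabs_right r) by lra.
  eapply Rle_trans; [|apply fact_bound; apply Rmult_le_pos; lra].
  rewrite Rpow_mult_distr. unfold Rdiv.
  replace (B ^ k * r ^ k * / INR (fact k)) with (B ^ k * / INR (fact k) * r ^ k) by ring.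
  apply Rmult_le_compat_r; [apply pow_le; lra| apply Ha].
Qed.

Section Gen.
Variable n : nat.
Variable M : nat -> nat -> R.
Variable K : R.
Hypothesis HK : 0 <= K.
Hypothesis HM : forall u w, Rabs (M u w) <= K.

Lemma acoef_radius s : (forall k, Rabs (s k) <= 1) -> forall u v t,
  Rbar_lt (Rabs t) (CV_radius (acoef s n M u v)).
Proof.
  intros Hs u v. apply radius_inf with (INR n * K).
  { apply Rmult_le_pos; auto using pos_INR. }
  intros k. unfold acoef. rewrite Rabs_mult. unfold Rdiv. rewrite Rabs_mult.
  rewrite Rabs_inv, (Rabs_right (INR (fact k))) by (apply Rle_ge, pos_INR).
  replace ((INR n * K) ^ k * / INR (fact k)) with (1 * / INR (fact k) * (INR n * K) ^ k) by ring.
  apply Rmult_le_compat; auto using Rabs_pos, Mpow_bound.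
  - apply Rmult_le_pos; auto using Rabs_pos. left; apply Rinv_0_lt_compat, INR_fact_lt_0.
  - apply Rmult_le_compat_r; auto. left; apply Rinv_0_lt_compat, INR_fact_lt_0.
Qed.
End Gen.

Lemma is_pseries_zero (t : R) : is_pseries (fun _ : nat => 0) t 0.
Proof.
  unfold is_pseries, is_series.
  apply filterlim_ext with (fun _ => 0).
  - intros N. induction N.
    + rewrite sum_O. change (scal (pow_n t 0) 0) with (pow_n t 0 * 0). ring.
    + rewrite sum_Sn, <- IHN. change (scal (pow_n t (S N)) 0) with (pow_n t (S N) * 0).
      change (0 = 0 + pow_n t (S N) * 0). ring.
  - apply filterlim_const.
Qed.

Lemma PSeries_sumR m (c : nat -> R) (a : nat -> nat -> R) t :
  (forall w, (w < m)%nat -> ex_pseries (a w) t) ->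
  PSeries (fun k => sumR m (fun w => c w * a w k)) t = sumR m (fun w => c w * PSeries (a w) t).
Proof.
  intros Ha. apply is_pseries_unique. induction m.
  - apply is_pseries_ext with (fun _ => 0); [intros; reflexivity|]. apply is_pseries_zero.
  - rewrite sumR_S.
    apply is_pseries_ext with (PS_plus (fun k => sumR m (fun w => c w * a w k)) (PS_scal (c m) (a m))).
    { intros k. unfold PS_plus, PS_scal. rewrite sumR_S. reflexivity. }
    apply (is_pseries_plus _ _ t (sumR m (fun w => c w * PSeries (a w) t)) (scal (c m) (PSeries (a m) t))).
    + apply IHm. intros; apply Ha; lia.
    + apply (@is_pseries_scal R_AbsRing R_NormedModule (c m) (a m) t (PSeries (a m) t)). { change (t * c m = c m * t). ring. }
      apply PSeries_correct. apply Ha. lia.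
Qed.

Section Gen2.
Variable n : nat.
Variable M : nat -> nat -> R.
Variable K : R.
Hypothesis HK : 0 <= K.
Hypothesis HM : forall u w, Rabs (M u w) <= K.

Definition Xf (s : nat -> R) u v t := PSeries (acoef s n M u v) t.

Lemma ex_X s : (forall k, Rabs (s k) <= 1) -> forall u v t, ex_pseries (acoef s n M u v) t.
Proof. intros Hs u v t. apply CV_radius_inside. apply (acoef_radius n M K); auto. Qed.

Lemma PSd_gen s u v k :
  PS_derive (acoef s n M u v) k = s (S k) / INR (fact k) * sumR n (fun w => M u w * Mpow n M k w v).
Proof.
  unfold PS_derive, acoef. change (fact (S k)) with (S k * fact k)%nat.
  change (Mpow n M (S k) u v) with (sumR n (fun w => M u w * Mpow n M k w v)).
  rewrite mult_INR. field. split; [apply INR_fact_neq_0| apply not_0_INR; lia].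
Qed.

Lemma PSd_re u v k :
  PS_derive (acoef re_ipow n M u v) k = sumR n (fun w => (- M u w) * acoef im_ipow n M w v k).
Proof.
  rewrite PSd_gen, (proj1 (re_im_succ k)). unfold acoef.
  rewrite <- sumR_scal. apply sumR_ext. intros. field. apply INR_fact_neq_0.
Qed.

Lemma PSd_im u v k :
  PS_derive (acoef im_ipow n M u v) k = sumR n (fun w => M u w * acoef re_ipow n M w v k).
Proof.
  rewrite PSd_gen, (proj2 (re_im_succ k)). unfold acoef.
  rewrite <- sumR_scal. apply sumR_ext. intros. field. apply INR_fact_neq_0.
Qed.

Lemma deriv_re u v t :
  is_derive (fun t => Xf re_ipow u v t) t (sumR n (fun w => (- M u w) * Xf im_ipow w v t)).
Proof.
  unfold Xf. rewrite <- PSeries_sumR.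
  2:{ intros. apply ex_X. apply im_ipow_bound. }
  rewrite <- (PSeries_ext _ _ _ (PSd_re u v)).
  apply is_derive_PSeries. apply (acoef_radius n M K); auto. apply re_ipow_bound.
Qed.

Lemma deriv_im u v t :
  is_derive (fun t => Xf im_ipow u v t) t (sumR n (fun w => M u w * Xf re_ipow w v t)).
Proof.
  unfold Xf. rewrite <- PSeries_sumR.
  2:{ intros. apply ex_X. apply re_ipow_bound. }
  rewrite <- (PSeries_ext _ _ _ (PSd_im u v)).
  apply is_derive_PSeries. apply (acoef_radius n M K); auto. apply im_ipow_bound.
Qed.

Lemma commute s : (forall k, Rabs (s k) <= 1) -> forall u v t, (u < n)%nat -> (v < n)%nat ->
  sumR n (fun w => M u w * Xf s w v t) = sumR n (fun w => M w v * Xf s u w t).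
Proof.
  intros Hs u v t Hu Hv. unfold Xf. rewrite <- !PSeries_sumR by (intros; apply ex_X; auto).
  apply PSeries_ext. intros k. unfold acoef.
  transitivity (s k / INR (fact k) * Mpow n M (S k) u v).
  - simpl Mpow at 2. rewrite <- sumR_scal. apply sumR_ext; intros; ring.
  - rewrite Mpow_S_r by auto. rewrite <- sumR_scal. apply sumR_ext; intros; ring.
Qed.
End Gen2.

Lemma is_derive_sumR m (f : nat -> R -> R) (df : nat -> R) t :
  (forall y, (y < m)%nat -> is_derive (f y) t (df y)) ->
  is_derive (fun t => sumR m (fun y => f y t)) t (sumR m df).
Proof.
  induction m; intros H.
  - apply is_derive_ext with (fun _ => 0). { intros; reflexivity. }
    apply (@is_derive_const R_AbsRing R_NormedModule 0 t).
  - apply is_derive_ext with (fun t => plus (sumR m (fun y => f y t)) (f m t)).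
    { intros. rewrite sumR_S. reflexivity. }
    rewrite sumR_S. apply (@is_derive_plus R_AbsRing R_NormedModule).
    + apply IHm; intros; apply H; lia.
    + apply H; lia.
Qed.

Section Energy.
Variable n : nat.
Variable M : nat -> nat -> R.
Variable K : R.
Hypothesis HK : 0 <= K.
Hypothesis HM : forall u w, Rabs (M u w) <= K.
Hypothesis HS : forall u v, (u < n)%nat -> (v < n)%nat -> M u v = M v u.

Definition Cf := Xf n M re_ipow.
Definition Sf := Xf n M im_ipow.

Lemma energy_deriv x t : (x < n)%nat ->
  is_derive (fun t => sumR n (fun y => Cf x y t ^ 2 + Sf x y t ^ 2)) t 0.
Proof.
  intros Hx.
  assert (H : is_derive (fun t => sumR n (fun y => Cf x y t ^ 2 + Sf x y t ^ 2)) t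
     (sumR n (fun y => INR 2 * sumR n (fun w => (- M x w) * Sf w y t) * Cf x y t ^ 1
                   + INR 2 * sumR n (fun w => M x w * Cf w y t) * Sf x y t ^ 1))).
  { apply is_derive_sumR. intros y Hy.
    apply (@is_derive_plus R_AbsRing R_NormedModule (fun t => Cf x y t ^ 2) (fun t => Sf x y t ^ 2)).
    - apply is_derive_pow. apply (deriv_re n M K); auto.
    - apply is_derive_pow. apply (deriv_im n M K); auto. }
  replace 0 with (sumR n (fun y => INR 2 * sumR n (fun w => (- M x w) * Sf w y t) * Cf x y t ^ 1
                   + INR 2 * sumR n (fun w => M x w * Cf w y t) * Sf x y t ^ 1)); auto.
  assert (Key : sumR n (fun y => Cf x y t * sumR n (fun w => M x w * Sf w y t)) =
                sumR n (fun y => Sf x y t * sumR n (fun w => M x w * Cf w y t))).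
  { transitivity (sumR n (fun y => sumR n (fun w => Sf x w t * (Cf x y t * M w y)))).
    - apply sumR_ext. intros y Hy. unfold Sf. rewrite (commute n M K) by (auto; apply im_ipow_bound).
      rewrite <- sumR_scal. apply sumR_ext; intros; ring.
    - rewrite sumR_swap. apply sumR_ext. intros w Hw. rewrite sumR_scal. f_equal.
      transitivity (sumR n (fun y => M y w * Cf x y t)).
      + apply sumR_ext; intros y Hy. rewrite HS by auto. ring.
      + unfold Cf. rewrite <- (commute n M K) by (auto; apply re_ipow_bound). reflexivity. }
  transitivity (2 * (sumR n (fun y => Sf x y t * sumR n (fun w => M x w * Cf w y t))
                   - sumR n (fun y => Cf x y t * sumR n (fun w => M x w * Sf w y t)))).
  2:{ rewrite Key. ring. }
  rewrite <- sumR_minus, <- sumR_scal. apply sumR_ext. intros y Hy.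
  rewrite (sumR_ext n (fun w => - M x w * Sf w y t) (fun w => -1 * (M x w * Sf w y t)))
    by (intros; ring).
  rewrite sumR_scal. simpl INR. ring.
Qed.

Lemma energy0 x : (x < n)%nat -> sumR n (fun y => Cf x y 0 ^ 2 + Sf x y 0 ^ 2) = 1.
Proof.
  intros Hx. unfold Cf, Sf, Xf. rewrite (sumR_ext n _ (fun y => if Nat.eqb y x then 1 else 0)).
  { apply sumR_delta; auto. }
  intros y Hy. rewrite !PSeries_0. unfold acoef, re_ipow, im_ipow. simpl.
  rewrite Nat.eqb_sym. destruct (Nat.eqb y x); lra.
Qed.

Lemma energy x t : (x < n)%nat -> sumR n (fun y => Cf x y t ^ 2 + Sf x y t ^ 2) = 1.
Proof.
  intros Hx. rewrite <- (energy0 x Hx).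
  set (E := fun t => sumR n (fun y => Cf x y t ^ 2 + Sf x y t ^ 2)).
  change (E t = E 0).
  destruct (Rtotal_order t 0) as [Hlt|[Heq|Hgt]].
  - apply (@eq_is_derive R_NormedModule E t 0); auto. intros; apply energy_deriv; auto.
  - subst; reflexivity.
  - symmetry. apply (@eq_is_derive R_NormedModule E 0 t); auto. intros; apply energy_deriv; auto.
Qed.
End Energy.

Lemma series_value_eq f l : infinite_sum f l -> series_value f = l.
Proof.
  intros H. unfold series_value. apply uniqueness_sum with f; auto.
  apply epsilon_spec. exists l; auto.
Qed.

Lemma degree_bounds n adj u : 0 <= degree n adj u <= INR n.
Proof.
  unfold degree. split.
  - pose proof (sumR_le n (fun _ => 0) (fun w => if adj u w then 1 else 0)) as H.
    rewrite sumR_const in H. assert (INR n * 0 = 0) by ring.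
    assert (sumR n (fun _ => 0) <= sumR n (fun w => if adj u w then 1 else 0)).
    { apply sumR_le. intros w _. destruct (adj u w); lra. }
    rewrite sumR_const in H1. lra.
  - assert (sumR n (fun w => if adj u w then 1 else 0) <= sumR n (fun _ => 1)).
    { apply sumR_le. intros w _. destruct (adj u w); lra. }
    rewrite sumR_const in H. lra.
Qed.

Lemma lap_bound n adj u w : Rabs (laplacian n adj u w) <= INR n + 1.
Proof.
  unfold laplacian. pose proof (degree_bounds n adj u).
  destruct (Nat.eqb u w), (adj u w); apply Rabs_le; lra.
Qed.

Lemma lap_sym n adj : simple_graph n adj -> forall u v, (u < n)%nat -> (v < n)%nat ->
  laplacian n adj u v = laplacian n adj v u.
Proof.
  intros [Hs _] u v Hu Hv. unfold laplacian. destruct (Nat.eqb_spec u v).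
  - subst. rewrite Nat.eqb_refl. reflexivity.
  - destruct (Nat.eqb_spec v u); [lia|]. rewrite Hs by auto. reflexivity.
Qed.

Lemma Kpos n : 0 <= INR n + 1.
Proof. pose proof (pos_INR n); lra. Qed.

Lemma U_re_eq n adj t x y : U_re n adj t x y = Cf n (laplacian n adj) x y t.
Proof.
  unfold U_re. apply series_value_eq. apply is_series_Reals.
  assert (E : ex_pseries (acoef re_ipow n (laplacian n adj) x y) t).
  { apply (ex_X n _ (INR n + 1)); auto using Kpos, lap_bound, re_ipow_bound. }
  apply PSeries_correct in E. unfold is_pseries in E.
  eapply is_series_ext; [|apply E]. intros k. simpl.
  change (scal (pow_n t k) (acoef re_ipow n (laplacian n adj) x y k))
    with (pow_n t k * acoef re_ipow n (laplacian n adj) x y k).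
  rewrite pow_n_pow, lap_pow_Mpow. unfold acoef. field. apply INR_fact_neq_0.
Qed.

Lemma U_im_eq n adj t x y : U_im n adj t x y = Sf n (laplacian n adj) x y t.
Proof.
  unfold U_im. apply series_value_eq. apply is_series_Reals.
  assert (E : ex_pseries (acoef im_ipow n (laplacian n adj) x y) t).
  { apply (ex_X n _ (INR n + 1)); auto using Kpos, lap_bound, im_ipow_bound. }
  apply PSeries_correct in E. unfold is_pseries in E.
  eapply is_series_ext; [|apply E]. intros k. simpl.
  change (scal (pow_n t k) (acoef im_ipow n (laplacian n adj) x y k))
    with (pow_n t k * acoef im_ipow n (laplacian n adj) x y k).
  rewrite pow_n_pow, lap_pow_Mpow. unfold acoef. field. apply INR_fact_neq_0.
Qed.

Lemma Mpow_const lam k : Mpow 1 (fun _ _ => lam) k 0 0 = lam ^ k.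
Proof.
  induction k; [reflexivity|]. simpl Mpow. rewrite sumR_S. unfold sumR at 1. simpl.
  rewrite IHk. ring.
Qed.

Lemma scalar_energy lam t :
  Cf 1 (fun _ _ => lam) 0 0 t ^ 2 + Sf 1 (fun _ _ => lam) 0 0 t ^ 2 = 1.
Proof.
  pose proof (energy 1 (fun _ _ => lam) (Rabs lam) (Rabs_pos lam) (fun _ _ => Rle_refl _)
     (fun _ _ _ _ => eq_refl) 0 t ltac:(lia)) as H.
  rewrite sumR_S in H. unfold sumR at 1 in H. simpl in H. lra.
Qed.

Section Graph.
Variable n : nat.
Variable adj : nat -> nat -> bool.
Variable Cl : nat -> bool.
Hypothesis Hg : simple_graph n adj.
Hypothesis Hc : is_clique n adj Cl.

Lemma ng_facts v : in_nongateway n adj Cl v = true ->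
  Cl v = true /\ (v < n)%nat /\ forall w, (w < n)%nat -> Cl w = false -> adj v w = false.
Proof.
  intros H. unfold in_nongateway, gatewayb in H. apply andb_prop in H as [H1 H2].
  rewrite H1 in H2. simpl in H2. apply negb_true_iff in H2.
  split; [auto|]. split; [apply (proj1 Hc); auto|].
  intros w Hw Hcw. destruct (adj v w) eqn:E; auto.
  assert (existsb (fun w0 => negb (Cl w0) && adj v w0) (seq 0 n) = true).
  { apply existsb_exists. exists w. split; [apply in_seq; lia|]. rewrite Hcw, E. reflexivity. }
  congruence.
Qed.

Lemma adj_ng v w : in_nongateway n adj Cl v = true -> (w < n)%nat ->
  adj v w = (Cl w && negb (Nat.eqb w v)).
Proof.
  intros Hv Hw. destruct (ng_facts v Hv) as [Hcv [Hvn Hout]].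
  destruct (Nat.eqb_spec w v).
  - subst. rewrite (proj2 Hg) by auto. rewrite andb_false_r. reflexivity.
  - destruct (Cl w) eqn:E.
    + simpl. apply (proj2 Hc); auto.
    + simpl. apply Hout; auto.
Qed.

Definition lam := sumR n (fun w => if Cl w then 1 else 0).

Lemma deg_ng v : in_nongateway n adj Cl v = true -> degree n adj v = lam - 1.
Proof.
  intros Hv. destruct (ng_facts v Hv) as [Hcv [Hvn Hout]]. unfold degree.
  rewrite (sumR_ext n _ (fun w => (if Cl w then 1 else 0) - (if Nat.eqb w v then 1 else 0))).
  2:{ intros w Hw. rewrite adj_ng by auto. destruct (Nat.eqb_spec w v).
      - subst. rewrite Hcv. simpl. lra.
      - destruct (Cl w); simpl; lra. }
  rewrite sumR_minus. rewrite (sumR_delta n v (fun _ => 1)) by auto. unfold lam. reflexivity.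
Qed.

Variables x y : nat.
Hypothesis Hx : in_nongateway n adj Cl x = true.
Hypothesis Hy : in_nongateway n adj Cl y = true.
Hypothesis Hxy : x <> y.

Lemma lap_diff w : (w < n)%nat ->
  laplacian n adj w x - laplacian n adj w y =
  lam * ((if Nat.eqb w x then 1 else 0) - (if Nat.eqb w y then 1 else 0)).
Proof.
  intros Hw. destruct (ng_facts x Hx) as [Hcx [Hxn _]]. destruct (ng_facts y Hy) as [Hcy [Hyn _]].
  unfold laplacian.
  destruct (Nat.eqb_spec w x); [|destruct (Nat.eqb_spec w y)].
  - subst. destruct (Nat.eqb_spec x y); [lia|].
    rewrite (adj_ng x x), (adj_ng x y) by auto. rewrite Nat.eqb_refl, Hcy.
    destruct (Nat.eqb_spec y x); [lia|]. rewrite andb_false_r. simpl. rewrite deg_ng by auto. lra.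
  - subst. rewrite (adj_ng y x), (adj_ng y y) by auto. rewrite Nat.eqb_refl, Hcx.
    destruct (Nat.eqb_spec x y); [lia|]. rewrite andb_false_r. simpl. rewrite deg_ng by auto. lra.
  - rewrite (proj1 Hg w x), (proj1 Hg w y) by auto.
    rewrite (adj_ng x w), (adj_ng y w) by auto.
    destruct (Nat.eqb_spec w x); [lia|]. destruct (Nat.eqb_spec w y); [lia|].
    destruct (Cl w); simpl; lra.
Qed.

Lemma eig_diff k : Mpow n (laplacian n adj) k x x - Mpow n (laplacian n adj) k x y = lam ^ k.
Proof.
  destruct (ng_facts x Hx) as [Hcx [Hxn _]]. destruct (ng_facts y Hy) as [Hcy [Hyn _]].
  induction k.
  - simpl. rewrite Nat.eqb_refl. destruct (Nat.eqb_spec x y); [lia|]. lra.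
  - rewrite !Mpow_S_r by auto. rewrite <- sumR_minus.
    rewrite (sumR_ext n _ (fun w => (if Nat.eqb w x then lam * Mpow n (laplacian n adj) k x w else 0)
                                - (if Nat.eqb w y then lam * Mpow n (laplacian n adj) k x w else 0))).
    2:{ intros w Hw. rewrite <- Rmult_minus_distr_l, lap_diff by auto.
        destruct (Nat.eqb w x), (Nat.eqb w y); ring. }
    rewrite sumR_minus, !sumR_delta by auto. rewrite <- Rmult_minus_distr_l, IHk. simpl. ring.
Qed.

Lemma ex_lap s : (forall k, Rabs (s k) <= 1) -> forall u v t,
  ex_pseries (acoef s n (laplacian n adj) u v) t.
Proof. intros. apply (ex_X n _ (INR n + 1)); auto using Kpos, lap_bound. Qed.

Lemma Xdiff s : (forall k, Rabs (s k) <= 1) -> forall t,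
  Xf n (laplacian n adj) s x x t - Xf n (laplacian n adj) s x y t = Xf 1 (fun _ _ => lam) s 0 0 t.
Proof.
  intros Hs t. unfold Xf. rewrite <- PSeries_minus by (apply ex_lap; auto).
  apply PSeries_ext. intros k. unfold PS_minus.
  change (minus (acoef s n (laplacian n adj) x x k) (acoef s n (laplacian n adj) x y k))
    with (acoef s n (laplacian n adj) x x k + - acoef s n (laplacian n adj) x y k).
  unfold acoef. rewrite Mpow_const, <- eig_diff. rewrite Rmult_minus_distr_l. reflexivity.
Qed.
End Graph.

Lemma real_final Cd Sd a b d : Cd ^ 2 + Sd ^ 2 = 1 -> a ^ 2 + b ^ 2 <= d ^ 2 -> 0 < d -> d <= 1/3 ->
  Rabs ((Cd + a) ^ 2 + (Sd + b) ^ 2 - 1) < 3 * d.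
Proof.
  intros H1 H2 Hd Hd3.
  assert (CS : (Cd * a + Sd * b) ^ 2 <= d ^ 2).
  { assert ((Cd * a + Sd * b) ^ 2 <= (Cd ^ 2 + Sd ^ 2) * (a ^ 2 + b ^ 2)).
    { assert (0 <= (Cd * b - Sd * a) ^ 2) by (apply pow2_ge_0). nra. }
    rewrite H1 in H. lra. }
  assert (Habs : Rabs (Cd * a + Sd * b) <= d).
  { apply Rabs_le; split; nra. }
  replace ((Cd + a) ^ 2 + (Sd + b) ^ 2 - 1) with (2 * (Cd * a + Sd * b) + (a ^ 2 + b ^ 2)) by nra.
  eapply Rle_lt_trans; [apply Rabs_triang|]. rewrite Rabs_mult, Rabs_right by lra.
  rewrite (Rabs_right (a ^ 2 + b ^ 2)) by (apply Rle_ge; nra).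
  assert (d ^ 2 < d) by nra. lra.
Qed.

Lemma per_graph n adj Cl x t :
  simple_graph n adj -> is_clique n adj Cl -> in_nongateway n adj Cl x = true ->
  (2 <= card_nongateway n adj Cl)%nat ->
  exists Cd Sd a b, Cd ^ 2 + Sd ^ 2 = 1 /\ (INR (card_nongateway n adj Cl) - 1) * (a ^ 2 + b ^ 2) <= 1
    /\ transition_prob n adj t x x = (Cd + a) ^ 2 + (Sd + b) ^ 2.
Proof.
  intros Hg Hc Hx Hs.
  destruct (ng_facts n adj Cl Hc x Hx) as [Hcx [Hxn _]].
  set (s := card_nongateway n adj Cl) in *.
  set (T := fun y => in_nongateway n adj Cl y && negb (Nat.eqb y x)).
  set (f := fun y => Cf n (laplacian n adj) x y t ^ 2 + Sf n (laplacian n adj) x y t ^ 2).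
  assert (Hf0 : forall y, 0 <= f y) by (intros; unfold f; nra).
  assert (Hen : sumR n f = 1).
  { apply (energy n _ (INR n + 1)); auto using Kpos, lap_bound. apply lap_sym; auto. }
  assert (Hcnt : sumR n (fun y => if T y then 1 else 0) = INR s - 1).
  { rewrite (sumR_ext n _ (fun y => (if in_nongateway n adj Cl y then 1 else 0) - (if Nat.eqb y x then 1 else 0))).
    2:{ intros y _. unfold T. destruct (Nat.eqb_spec y x).
        - subst. rewrite Hx. simpl. lra.
        - destruct (in_nongateway n adj Cl y); simpl; lra. }
    rewrite sumR_minus, sumR_count, (sumR_delta n x (fun _ => 1)) by auto. reflexivity. }
  assert (Hs2 : 2 <= INR s) by (apply (le_INR 2); auto).
  assert (Hex : exists y, (y < n)%nat /\ T y = true /\ (INR s - 1) * f y <= 1).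
  { apply NNPP. intros Hno.
    assert (Hall : forall y, (y < n)%nat -> T y = true -> 1 < (INR s - 1) * f y).
    { intros y Hy HT. apply Rnot_le_lt. intros Hle. apply Hno. exists y; auto. }
    assert (Hsome : exists y, (y < n)%nat /\ T y = true).
    { apply NNPP. intros Hn.
      assert (sumR n (fun y => if T y then 1 else 0) = 0).
      { rewrite (sumR_ext n _ (fun _ => 0)). { rewrite sumR_const; ring. }
        intros y Hy. destruct (T y) eqn:E; auto. exfalso; apply Hn; exists y; auto. }
      lra. }
    assert (sumR n (fun y => if T y then 1 else 0) < sumR n (fun y => if T y then (INR s - 1) * f y else 0)).
    { apply sumR_lt.
      - intros y Hy. destruct (T y) eqn:E; [|lra]. left; apply Hall; auto.
      - destruct Hsome as [y [Hy HT]]. exists y. split; auto. rewrite HT. apply Hall; auto. }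
    assert (sumR n (fun y => if T y then (INR s - 1) * f y else 0) <= sumR n (fun y => (INR s - 1) * f y)).
    { apply sumR_le. intros y _. destruct (T y); [lra|]. pose proof (Hf0 y). nra. }
    rewrite sumR_scal, Hen in H0. lra. }
  destruct Hex as [y [Hyn [HT Hfy]]].
  unfold T in HT. apply andb_prop in HT as [Hy Hxy]. apply negb_true_iff in Hxy.
  apply Nat.eqb_neq in Hxy.
  exists (Cf 1 (fun _ _ => lam n Cl) 0 0 t), (Sf 1 (fun _ _ => lam n Cl) 0 0 t),
    (Cf n (laplacian n adj) x y t), (Sf n (laplacian n adj) x y t).
  split; [apply scalar_energy|]. split; [exact Hfy|].
  unfold transition_prob. rewrite U_re_eq, U_im_eq. unfold Cf, Sf.
  rewrite <- (Xdiff n adj Cl Hg Hc x y Hx Hy ltac:(auto) re_ipow re_ipow_bound t).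
  rewrite <- (Xdiff n adj Cl Hg Hc x y Hx Hy ltac:(auto) im_ipow im_ipow_bound t).
  f_equal; f_equal; ring.
Qed.

Theorem proposition3p2
  (n : nat -> nat) (adj : nat -> nat -> nat -> bool) (C : nat -> nat -> bool)
  (x : nat -> nat)
  (Hgraph : forall m, simple_graph (n m) (adj m))
  (Hclique : forall m, is_clique (n m) (adj m) (C m))
  (Hdiv : forall M : nat, exists N : nat, forall m : nat,
            (N <= m)%nat -> (M <= card_nongateway (n m) (adj m) (C m))%nat)
  (Hx : forall m, in_nongateway (n m) (adj m) (C m) (x m) = true) :
  forall t : R, 0 <= t ->
    Un_cv (fun m => transition_prob (n m) (adj m) t (x m) (x m)) 1.
Proof.
  intros t _ eps Heps.
  set (d := Rmin eps 1 / 3).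
  assert (Hd : 0 < d) by (pose proof (Rmin_pos eps 1 Heps Rlt_0_1); unfold d; lra).
  assert (Hd3 : d <= 1/3) by (unfold d; pose proof (Rmin_r eps 1); lra).
  assert (Hde : 3 * d <= eps) by (unfold d; pose proof (Rmin_l eps 1); lra).
  assert (Hpos : 0 <= 1 / d ^ 2 + 2).
  { assert (0 < 1 / d ^ 2) by (apply Rdiv_lt_0_compat; [lra| apply pow_lt; lra]). lra. }
  destruct (nfloor_ex _ Hpos) as [Nb [HNb1 HNb2]].
  destruct (Hdiv (S Nb)) as [N HN]. exists N. intros m Hm.
  specialize (HN m Hm). set (s := card_nongateway (n m) (adj m) (C m)) in *.
  assert (Hs : 1 / d ^ 2 + 2 < INR s).
  { apply le_INR in HN. rewrite S_INR in HN. lra. }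
  assert (Hs2 : (2 <= s)%nat).
  { destruct (le_lt_dec 2 s); auto. assert (INR s <= 1) by (apply (le_INR s 1); lia).
    assert (0 < 1 / d ^ 2) by (apply Rdiv_lt_0_compat; [lra| apply pow_lt; lra]). lra. }
  destruct (per_graph (n m) (adj m) (C m) (x m) t (Hgraph m) (Hclique m) (Hx m) Hs2)
    as [Cd [Sd [a [b [H1 [H2 H3]]]]]].
  unfold R_dist. rewrite H3.
  eapply Rlt_le_trans; [apply real_final; eauto|exact Hde].
  fold s in H2.
  assert (Hd2 : 0 < d ^ 2) by (apply pow_lt; lra).
  assert (E : (1 / d ^ 2) * (a ^ 2 + b ^ 2) <= 1).
  { eapply Rle_trans; [|exact H2]. apply Rmult_le_compat_r; [nra| lra]. }
  unfold Rdiv in E. rewrite Rmult_1_l in E.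
  apply (Rmult_le_compat_l (d ^ 2)) in E; [|lra].
  rewrite <- Rmult_assoc, Rinv_r, Rmult_1_l, Rmult_1_r in E by lra. exact E.
Qed.
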